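(* For every integer $k\ge 2$ there exists a cubic graph $G$ with a proper $5$-edge-coloring $c$ such that $|N_G(c)|=k$.
   Context: Graphs are finite, undirected, loopless, and may contain parallel edges. A proper $5$-edge-coloring of $G$ is a map $c:E(G)\to\{1,\dots,5\}$ with adjacent edges receiving different colors. For such $c$ and a vertex $v$, $S_c(v)$ is the set of colors on edges incident to $v$. An edge $uv$ of a cubic graph is poor if $|S_c(u)\cup S_c(v)|=3$, rich if $|S_c(u)\cup S_c(v)|=5$, and abnormal if it is neither poor nor rich. $N_G(c)$ denotes the set of abnormal edges of $G$ with respect to $c$. *)

(* Defs.v *)
From mathcomp Require Import all_boot.
Set Implicit Arguments. Unset Strict Implicit. Unset Printing Implicit Defensive.

(* A finite multigraph: vertex type V, edge type E, each edge e has
   endpoints (src e, dst e).  Parallel edges allowed (distinct edges may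
   have the same endpoints). *)
Section Graphs.
Variables (V E : finType) (src dst : E -> V).

Definition loopless : Prop := forall e, src e != dst e.

Definition incident (v : V) (e : E) : bool := (src e == v) || (dst e == v).

Definition inc_edges (v : V) : {set E} := [set e | incident v e].

(* cubic: every vertex has degree 3 (loopless, so degree = #incident edges) *)
Definition cubic : Prop := forall v, #|inc_edges v| = 3.

(* colours 1..5 are represented by 'I_5 *)
Definition proper_coloring (c : E -> 'I_5) : Prop :=
  forall e f, e != f -> (exists v, incident v e && incident v f) -> c e != c f.

Definition Sc (c : E -> 'I_5) (v : V) : {set 'I_5} := c @: inc_edges v.

Definition poor (c : E -> 'I_5) (e : E) : bool :=
  #|Sc c (src e) :|: Sc c (dst e)| == 3.
Definition rich (c : E -> 'I_5) (e : E) : bool :=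
  #|Sc c (src e) :|: Sc c (dst e)| == 5.
Definition abnormal (c : E -> 'I_5) (e : E) : bool :=
  ~~ poor c e && ~~ rich c e.

Definition abnormal_edges (c : E -> 'I_5) : {set E} := [set e | abnormal c e].
End Graphs.

(* Main.v *)
Require Import Defs.
From mathcomp Require Import all_boot zify.

Lemma card_count (T : finType) (A : {pred T}) : #|A| = count (mem A) (enum T).
Proof. rewrite cardE /enum_mem size_filter /=. by rewrite (@eq_filter _ _ predT) // filter_predT. Qed.
Lemma cards_count (T : finType) (P : pred T) : #|[set x | P x]| = count P (enum T).
Proof. rewrite card_count; apply: eq_count => x /=; by rewrite inE. Qed.

Section Bridge.
Variables (V E : finType) (src dst : E -> V).
Definition Sb (c : E -> 'I_5) v x := has (fun e => incident src dst v e && (c e == x)) (enum E).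
Lemma Sc_mem c v x : (x \in Sc src dst c v) = Sb c v x.
Proof.
apply/imsetP/hasP => [[e He ->]|[e He /andP[Hi /eqP <-]]].
  exists e; first by rewrite mem_enum.
  by rewrite inE in He; rewrite He eqxx.
by exists e => //; rewrite inE.
Qed.
Definition ucard c e := count (fun x => Sb c (src e) x || Sb c (dst e) x) (enum 'I_5).
Lemma ucard_ok c e : #|Sc src dst c (src e) :|: Sc src dst c (dst e)| = ucard c e.
Proof. rewrite card_count; apply: eq_count => x /=; by rewrite in_setU !Sc_mem. Qed.
Definition abnb c e := (ucard c e != 3) && (ucard c e != 5).
Lemma abn_count c : #|abnormal_edges src dst c| = count (abnb c) (enum E).
Proof.
rewrite cards_count; apply: eq_count => e.
by rewrite /abnormal /poor /rich ucard_ok.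
Qed.
Lemma abn_b c e : abnormal src dst c e = abnb c e.
Proof. by rewrite /abnormal /poor /rich ucard_ok. Qed.
End Bridge.

Definition mk (p n : nat) : 'I_p.+1 := Ordinal (ltn_pmod n (ltn0Sn p)).
Definition L (p : nat) : seq 'I_p.+1 := map (mk p) (iota 0 p.+1).
Lemma enumL12 : enum 'I_12 = L 11.
Proof. apply: (inj_map val_inj). by rewrite val_enum_ord. Qed.
Lemma enumL5 : enum 'I_5 = L 4.
Proof. apply: (inj_map val_inj). by rewrite val_enum_ord. Qed.
Lemma enumL8 : enum 'I_8 = L 7.
Proof. apply: (inj_map val_inj). by rewrite val_enum_ord. Qed.

Definition srcA (e : 'I_12) : 'I_8 := mk 7 (nth 0 [:: 0;1;2;3;4;5;6;7;0;1;2;3] e).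
Definition dstA (e : 'I_12) : 'I_8 := mk 7 (nth 0 [:: 1;2;3;0;5;6;7;4;4;5;6;7] e).
Definition c3 (e : 'I_12) : 'I_5 := mk 4 (nth 0 [:: 0;1;2;3;1;0;3;4;2;3;4;0] e).
Definition c2 (e : 'I_12) : 'I_5 := mk 4 (nth 0 [:: 0;1;0;1;2;3;2;4;3;4;4;3] e).

Lemma A_n3 : #|abnormal_edges srcA dstA c3| = 3.
Proof. rewrite abn_count /abnb /ucard /Sb enumL12 enumL5. by vm_compute. Qed.
Lemma A_n2 : #|abnormal_edges srcA dstA c2| = 2.
Proof. rewrite abn_count /abnb /ucard /Sb enumL12 enumL5. by vm_compute. Qed.
Lemma A_loop e : srcA e != dstA e.
Proof.
have : all (fun e => srcA e != dstA e) (enum 'I_12) by rewrite enumL12; vm_compute.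
by move/allP; apply; rewrite mem_enum.
Qed.
Lemma A_cubic v : #|inc_edges srcA dstA v| = 3.
Proof.
have : all (fun v => count (incident srcA dstA v) (enum 'I_12) == 3) (enum 'I_8)
  by rewrite enumL12 enumL8; vm_compute.
move/allP => /(_ v); rewrite mem_enum => /(_ isT) H.
by rewrite /inc_edges cards_count; apply/eqP.
Qed.
Definition properb (c : 'I_12 -> 'I_5) :=
  all (fun e => all (fun f => (e != f) ==> has (fun v => incident srcA dstA v e && incident srcA dstA v f) (enum 'I_8) ==> (c e != c f)) (enum 'I_12)) (enum 'I_12).
Lemma properbP c : properb c -> proper_coloring srcA dstA c.
Proof.
move=> /allP H e f ne [v Hv].
have := H e; rewrite mem_enum => /(_ isT) /allP /(_ f); rewrite mem_enum => /(_ isT).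
rewrite ne /=; move/implyP; apply; apply/hasP; exists v => //; by rewrite mem_enum.
Qed.
Lemma A_p3 : proper_coloring srcA dstA c3.
Proof. apply: properbP; rewrite /properb enumL12 enumL8; by vm_compute. Qed.
Lemma A_p2 : proper_coloring srcA dstA c2.
Proof. apply: properbP; rewrite /properb enumL12 enumL8; by vm_compute. Qed.

Section Prod.
Variables (m k : nat).
Definition col (i : 'I_m) : 'I_12 -> 'I_5 := if odd k && (val i == 0) then c3 else c2.
Definition PV := ('I_m * 'I_8)%type.
Definition PE := ('I_m * 'I_12)%type.
Definition psrc (x : PE) : PV := (x.1, srcA x.2).
Definition pdst (x : PE) : PV := (x.1, dstA x.2).
Definition pc (x : PE) : 'I_5 := col x.1 x.2.

Lemma col_p i : proper_coloring srcA dstA (col i).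
Proof. rewrite /col; case: ifP => _; [exact: A_p3 | exact: A_p2]. Qed.

Lemma inc_prod i v j e :
  incident psrc pdst (i, v) (j, e) = (j == i) && incident srcA dstA v e.
Proof.
rewrite /incident /psrc /pdst /= !xpair_eqE.
by case: (j == i).
Qed.

Lemma inc_edges_prod i v :
  inc_edges psrc pdst (i, v) = (pair i) @: inc_edges srcA dstA v.
Proof.
apply/setP => -[j e]; rewrite inE inc_prod.
case: (eqVneq j i) => [->|ne] /=.
  apply/idP/imsetP => [H|[e' He' [->]]]; last by rewrite inE in He'.
  by exists e => //; rewrite inE.
apply/esym/negbTE/imsetP => -[e' _ [E1 _]]; by rewrite E1 eqxx in ne.
Qed.

Lemma Sc_prod i v : Sc psrc pdst pc (i, v) = Sc srcA dstA (col i) v.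
Proof. by rewrite /Sc inc_edges_prod -imset_comp. Qed.

Lemma abn_prod i e : abnormal psrc pdst pc (i, e) = abnormal srcA dstA (col i) e.
Proof. by rewrite /abnormal /poor /rich /psrc /pdst /= !Sc_prod. Qed.

Lemma P_loop : loopless psrc pdst.
Proof. move=> [i e]; rewrite /psrc /pdst xpair_eqE /= negb_and A_loop orbT. by []. Qed.

Lemma P_cubic : cubic psrc pdst.
Proof.
move=> [i v]; rewrite inc_edges_prod card_imset ?A_cubic //.
by move=> a b [].
Qed.

Lemma P_proper : proper_coloring psrc pdst pc.
Proof.
move=> [i e] [j f] ne [[l v] /andP[H1 H2]].
rewrite inc_prod in H1; rewrite inc_prod in H2.
case/andP: H1 => /eqP Ei H1; case/andP: H2 => /eqP Ej H2.
subst i j; rewrite /pc /=.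
apply: (col_p l) => //; last by exists v; rewrite H1 H2.
by apply: contraNneq ne => ->.
Qed.

Lemma P_count : #|abnormal_edges psrc pdst pc| =
  \sum_(i < m) #|abnormal_edges srcA dstA (col i)|.
Proof.
rewrite -sum1_card.
rewrite (eq_bigl (fun x : PE => abnormal srcA dstA (col x.1) x.2)); last first.
  by move=> [i e]; rewrite inE abn_prod.
rewrite -(pair_big_dep xpredT (fun i e => abnormal srcA dstA (col i) e) (fun _ _ => 1)) /=.
apply: eq_bigr => i _; rewrite -sum1_card; apply: eq_bigl => e; by rewrite inE.
Qed.
End Prod.

Theorem mainTheorem7 : forall k : nat, 2 <= k ->
  exists (V E : finType) (src dst : E -> V) (c : E -> 'I_5),
    [/\ loopless src dst, cubic src dst, proper_coloring src dst c &
        #|abnormal_edges src dst c| = k].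
Proof.
move=> k hk.
exists (PV k./2), (PE k./2), (@psrc k./2), (@pdst k./2), (@pc k./2 k).
split; [exact: P_loop | exact: P_cubic | exact: P_proper |].
rewrite P_count.
case ok: (odd k).
  have [n hn] : exists n, k./2 = n.+1.
    by exists (k./2).-1; rewrite prednK // half_gt0.
  rewrite hn big_ord_recl /col ok /= A_n3.
  rewrite (eq_bigr (fun _ => 2)); last by move=> i _; rewrite A_n2.
  rewrite sum_nat_const card_ord.
  rewrite -[RHS](odd_double_half k) ok hn. rewrite -!muln2. lia.
rewrite (eq_bigr (fun _ => 2)); last by move=> i _; rewrite /col ok A_n2.
rewrite sum_nat_const card_ord.
by rewrite -[RHS](odd_double_half k) ok add0n muln2.
Qed.
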